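(* Let $(X,\mathscr{L}_X)$ and $(Y,\mathscr{L}_Y)$ be weak Lipschitz spaces and let $f: X\to Y$ be a weak Lipschitz map. Then $f$ is continuous with respect to the topologies $\widehat{\tau}(\mathscr{L}_X)$ on $X$ and $\widehat{\tau}(\mathscr{L}_Y)$ on $Y$.
   Context: A weak pseudo-metric on a set $Z$ is a symmetric map $d: Z\times Z\to[0,\infty)$ satisfying $d(z_1,z_2)\le d(z_1,z)+d(z,z_2)$ for all $z,z_1,z_2$ and vanishing at at least one point of the diagonal (not necessarily on the whole diagonal). A weak Lipschitz structure for $Z$ is a non-empty family $\mathscr{L}$ of weak pseudo-metrics on $Z$ such that (L1) if $d$ is a weak pseudo-metric with $d\le d_1$ for some $d_1\in\mathscr{L}$ then $d\in\mathscr{L}$; (L2) $d\in\mathscr{L}$ implies $\alpha d\in\mathscr{L}$ for all real $\alpha>0$; (L3) $d_1,d_2\in\mathscr{L}$ imply $d_1\vee d_2\in\mathscr{L}$; the pair $(Z,\mathscr{L})$ is a weak Lipschitz space. $\widehat{\tau}(\mathscr{L})$ is the topology on $Z$ generated (as a subbase) by the sets $U_{d,\varepsilon}(z)=\{\xi\in Z: d(\xi,z)<\varepsilon\}$ with $d\in\mathscr{L}$, $z\in Z$, and real $\varepsilon>d(z,z)$. A map $f:X\to Y$ is a weak Lipschitz map if for every $d_Y\in\mathscr{L}_Y$ there is $d_X\in\mathscr{L}_X$ with $d_Y(f(x_1),f(x_2))\le d_X(x_1,x_2)$ for all $x_1,x_2\in X$. *)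

(* Defs.v *)
From Stdlib Require Import Reals.
Open Scope R_scope.

Definition weak_pseudo_metric {Z : Type} (d : Z -> Z -> R) : Prop :=
  (forall z1 z2, 0 <= d z1 z2) /\
  (forall z1 z2, d z1 z2 = d z2 z1) /\
  (forall z z1 z2, d z1 z2 <= d z1 z + d z z2) /\
  (exists z, d z z = 0).

Definition weak_lipschitz_structure {Z : Type} (L : (Z -> Z -> R) -> Prop) : Prop :=
  (exists d, L d) /\
  (forall d, L d -> weak_pseudo_metric d) /\
  (forall d d1, weak_pseudo_metric d -> L d1 ->
     (forall x y, d x y <= d1 x y) -> L d) /\
  (forall d (a : R), L d -> 0 < a -> L (fun x y => a * d x y)) /\
  (forall d1 d2, L d1 -> L d2 -> L (fun x y => Rmax (d1 x y) (d2 x y))).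

Definition U_ball {Z : Type} (d : Z -> Z -> R) (eps : R) (z : Z) : Z -> Prop :=
  fun xi => d xi z < eps.

Definition hat_subbase {Z : Type} (L : (Z -> Z -> R) -> Prop) (U : Z -> Prop) : Prop :=
  exists d eps z, L d /\ d z z < eps /\ (forall xi, U xi <-> U_ball d eps z xi).

Inductive generated_open {Z : Type} (S : (Z -> Prop) -> Prop) : (Z -> Prop) -> Prop :=
  | go_sub : forall U, S U -> generated_open S U
  | go_full : forall U, (forall x, U x) -> generated_open S U
  | go_inter : forall U V W, generated_open S U -> generated_open S V ->
      (forall x, W x <-> (U x /\ V x)) -> generated_open S W
  | go_union : forall (I : Type) (F : I -> Z -> Prop) W,
      (forall i, generated_open S (F i)) ->
      (forall x, W x <-> exists i, F i x) -> generated_open S W.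

Definition hat_open {Z : Type} (L : (Z -> Z -> R) -> Prop) (U : Z -> Prop) : Prop :=
  generated_open (hat_subbase L) U.

Definition weak_lipschitz_map {X Y : Type} (LX : (X -> X -> R) -> Prop)
  (LY : (Y -> Y -> R) -> Prop) (f : X -> Y) : Prop :=
  forall dY, LY dY -> exists dX, LX dX /\
    forall x1 x2, dY (f x1) (f x2) <= dX x1 x2.

Definition continuous_hat {X Y : Type} (LX : (X -> X -> R) -> Prop)
  (LY : (Y -> Y -> R) -> Prop) (f : X -> Y) : Prop :=
  forall V : Y -> Prop, hat_open LY V -> hat_open LX (fun x => V (f x)).

(* Main.v *)
Require Import Defs.
From Stdlib Require Import Reals Lra.
Open Scope R_scope.

Lemma sub_case (X Y : Type)
  (LX : (X -> X -> R) -> Prop) (LY : (Y -> Y -> R) -> Prop)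
  (HX : weak_lipschitz_structure LX) (HY : weak_lipschitz_structure LY)
  (f : X -> Y) (Hf : weak_lipschitz_map LX LY f) (V : Y -> Prop) :
  hat_subbase LY V -> hat_open LX (fun x => V (f x)).
Proof.
  intros [dY [eps [y [HdY [Hlt HV]]]]].
  destruct HY as [_ [HYw _]].
  destruct HX as [_ [_ [HL1 _]]].
  destruct (HYw dY HdY) as [Hnn [Hsym [Htri _]]].
  destruct (Hf dY HdY) as [dX [HdX Hle]].
  apply (go_union _ {x0 : X | dY (f x0) y < eps}
    (fun p xi => Rabs (dY (f xi) y - dY (f (proj1_sig p)) y)
                   < eps - dY (f (proj1_sig p)) y)).
  - intros [x0 Hx0]; simpl. apply go_sub.
    set (d' := fun a b => Rabs (dY (f a) y - dY (f b) y)).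
    exists d', (eps - dY (f x0) y), x0.
    split; [| split].
    + apply (HL1 d' dX).
      * unfold weak_pseudo_metric, d'. split; [|split; [|split]].
        -- intros; apply Rabs_pos.
        -- intros; rewrite Rabs_minus_sym; reflexivity.
        -- intros z z1 z2.
           replace (dY (f z1) y - dY (f z2) y) with
             ((dY (f z1) y - dY (f z) y) + (dY (f z) y - dY (f z2) y)) by ring.
           apply Rabs_triang.
        -- exists x0. replace (dY (f x0) y - dY (f x0) y) with 0 by ring.
           apply Rabs_R0.
      * exact HdX.
      * intros a b. unfold d'. apply Rle_trans with (dY (f a) (f b)); [|apply Hle].
        apply Rabs_le. pose proof (Htri (f b) (f a) y).
        pose proof (Htri (f a) (f b) y). rewrite (Hsym (f b) (f a)) in H0. lra.
    + unfold d'. replace (dY (f x0) y - dY (f x0) y) with 0 by ring.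
      rewrite Rabs_R0. lra.
    + intros xi. unfold U_ball, d'. tauto.
  - intros x. rewrite HV. unfold U_ball. split.
    + intros Hx. exists (exist _ x Hx). simpl.
      replace (dY (f x) y - dY (f x) y) with 0 by ring. rewrite Rabs_R0. lra.
    + intros [[x0 Hx0] H]. simpl in H.
      pose proof (Rle_abs (dY (f x) y - dY (f x0) y)). lra.
Qed.

Theorem theorem4p5 (X Y : Type)
  (LX : (X -> X -> R) -> Prop) (LY : (Y -> Y -> R) -> Prop)
  (HX : weak_lipschitz_structure LX) (HY : weak_lipschitz_structure LY)
  (f : X -> Y) (Hf : weak_lipschitz_map LX LY f) :
  continuous_hat LX LY f.
Proof.
  intros V HV. unfold hat_open in HV. induction HV.
  - eapply sub_case; eauto.
  - apply go_full. intros; auto.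
  - apply (go_inter _ (fun x => U (f x)) (fun x => V (f x))); auto; intros x; apply H.
  - apply (go_union _ I (fun i x => F i (f x))); auto; intros x; apply H0.

Qed.
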